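(* Consider the setting of the world-model-learning problem: $p_1,\dots,p_d\in(0,1)$ with $\sum_kp_k=1$; tasks $h_i=h_i'\circ\psi^{-1}$ sampled independently by drawing $k$ with $\Pr[k=i]=p_i$ and then $h_i'$ uniformly from $\mathcal{F}^d_k$; representations $\Phi$ range over maps $\{-1,1\}^m\to\mathcal{Z}$ with $\Phi\circ\psi$ a bijection of $\mathcal{Z}$, and $g_i$ is the unique function with $g_i\circ\Phi\in\mathcal{H}(h_i)$. Now measure degrees in a new basis: let $U_d$ be a compatible basis transform of $\mathbb{R}^{\{-1,1\}^d}$ and $U_m$ a compatible basis transform of $\mathbb{R}^{\{-1,1\}^m}$, and replace the objective by $\frac1n\big(\sum_{i=1}^n\deg_{U_d}(g_i)+\sum_{j=1}^d\deg_{U_m}(\Phi_j)\big)$. Then, almost surely, as $n\to\infty$ this objective converges for every admissible $\Phi$, and every $\Phi^*$ minimizing the limit learns the world model up to negations and permutations: there exist a permutation $i_1,\dots,i_d$ of $[d]$ and signs $s_j\in\{-1,1\}$ with $\Phi^*_j(\psi(z))=s_jz_{i_j}$ for all $j\in[d]$, $z\in\mathcal{Z}$.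
   Context: Standing setup: $m\ge d\ge1$, $\mathcal{Z}=\{-1,1\}^d$, $\psi:\mathcal{Z}\to\{-1,1\}^m$ injective, $\mathcal{X}=\psi(\mathcal{Z})$. For $f:\{-1,1\}^n\to\mathbb{R}$, $f=\sum_{S\subseteq[n]}\hat f(S)\chi_S$, $\chi_S(x)=\prod_{i\in S}x_i$, $\deg(f)=\max\{|S|:\hat f(S)\ne 0\}$. $\mathcal{H}(h)$: functions on $\{-1,1\}^m$ agreeing with task $h$ on $\mathcal{X}$. Finite-precision convention: fix finite $V\subset\mathbb{R}$ with $\{-1,1\}\subseteq V$; $\mathcal{F}^d$ = all functions $\{-1,1\}^d\to V$, $\mathcal{F}^d_k=\{h\in\mathcal{F}^d:\deg h\le k\}$. $\mathbb{R}^{\{-1,1\}^n}$ denotes the real vector space of all functions $\{-1,1\}^n\to\mathbb{R}$. A basis transform is an invertible linear map $U$ on $\mathbb{R}^{\{-1,1\}^n}$ (so $\{U(\chi_S)\}_{S\subseteq[n]}$ is a basis); the degree of $f$ under $U$ is $\deg_U(f):=\max\{\deg(U^{-1}(\chi_S)):\hat f(S)\ne0\}$. $U$ is compatible if $\deg(U(\chi_S))=\deg(\chi_S)=|S|$ for every $S\subseteq[n]$. *)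

(* Defs.v *)
From HB Require Import structures.
From mathcomp Require Import all_boot all_order all_algebra.
From mathcomp Require Import finmap fingroup perm.
From mathcomp Require Import all_classical all_reals all_analysis.
Set Implicit Arguments. Unset Strict Implicit. Unset Printing Implicit Defensive.
Import Order.TTheory GRing.Theory Num.Theory.
Local Open Scope classical_set_scope.
Local Open Scope ring_scope.

(* The hypercube {-1,1}^n: a point is encoded as x : 'I_n -> bool,
   coordinate i has the real value pm1 (x i) (true |-> 1, false |-> -1). *)
Notation cube n := {ffun 'I_n -> bool}.

Section Fourier.
Variable R : realType.

Definition pm1 (b : bool) : R := if b then 1 else -1.

Local Notation fn n := {ffun cube n -> R}.

Definition chi (n : nat) (S : {set 'I_n}) : fn n :=
  [ffun x : cube n => \prod_(i in S) pm1 (x i)].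

Definition fhat (n : nat) (f : fn n) (S : {set 'I_n}) : R :=
  (2 ^+ n)^-1 * \sum_(x : cube n) f x * chi S x.

(* deg f = max { |S| : \hat f(S) <> 0 }  (= 0 for f = 0) *)
Definition deg (n : nat) (f : fn n) : nat :=
  \max_(S : {set 'I_n} | fhat f S != 0) #|S|.

Definition lin_map (n : nat) (U : fn n -> fn n) : Prop :=
  forall (a : R) (f g : fn n),
    U [ffun x : cube n => a * f x + g x] = [ffun x : cube n => a * U f x + U g x].

Definition basis_transform (n : nat) (U Uinv : fn n -> fn n) : Prop :=
  lin_map U /\ cancel U Uinv /\ cancel Uinv U.

Definition compatible (n : nat) (U : fn n -> fn n) : Prop :=
  forall S : {set 'I_n}, deg (U (chi S)) = #|S|.

Definition degU (n : nat) (Uinv : fn n -> fn n) (f : fn n) : nat :=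
  \max_(S : {set 'I_n} | fhat f S != 0) deg (Uinv (chi S)).

Notation taskf d V := {ffun cube d -> V}.

Definition taskval (d : nat) (V : {fset R}) (h : taskf d V) : fn d :=
  [ffun z : cube d => val (h z)].

Definition Fk (d : nat) (V : {fset R}) (k : nat) : {set taskf d V} :=
  [set h | (deg (taskval h) <= k)%N].

Definition admissible (d m : nat) (psi : cube d -> cube m)
  (Phi : {ffun cube m -> cube d}) : Prop :=
  bijective (fun z => Phi (psi z)).

(* g : the unique function with g o Phi agreeing with h = h' o psi^{-1}
   on X = psi(Z), i.e. g (Phi (psi z)) = h' z (well defined for admissible
   Phi; the default value 0 is never used in that case). *)
Definition gfun (d m : nat) (V : {fset R}) (psi : cube d -> cube m)
  (Phi : {ffun cube m -> cube d}) (h : taskf d V) : fn d :=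
  [ffun y : cube d => (match [pick z | Phi (psi z) == y] with
             | Some z => val (h z) | None => 0 end : R)].

Definition coordf (d m : nat) (Phi : {ffun cube m -> cube d}) (j : 'I_d) : fn m :=
  [ffun x : cube m => pm1 (Phi x j)].

Definition objective (d m : nat) (V : {fset R}) (psi : cube d -> cube m)
  (Udinv : fn d -> fn d) (Uminv : fn m -> fn m)
  (tasks : nat -> taskf d V) (Phi : {ffun cube m -> cube d}) (n : nat) : R :=
  (n%:R)^-1 * ((\sum_(i < n) (degU Udinv (gfun psi Phi (tasks i)))%:R)
               + (\sum_(j < d) (degU Uminv (coordf Phi j)))%:R).

End Fourier.

Definition mutually_independent (R : realType) (dT : measure_display)
  (T : measurableType dT) (P : probability T R) (A : Type)
  (X : nat -> T -> A) : Prop :=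
  forall (I : {fset nat}) (a : nat -> A),
    P (\bigcap_(i in [set` I]) [set w | X i w = a i]) =
    (\prod_(i <- I) P [set w | X i w = a i])%E.

(* Main.v *)
Require Import Defs.
From HB Require Import structures.
From mathcomp Require Import all_boot all_order all_algebra.
From mathcomp Require Import finmap fingroup perm.
From mathcomp Require Import all_classical all_reals all_analysis.
From mathcomp Require Import measurable_realfun.
Import Order.TTheory GRing.Theory Num.Theory numFieldNormedType.Exports.
Local Open Scope classical_set_scope.
Local Open Scope ring_scope.
Set Implicit Arguments. Unset Strict Implicit. Unset Printing Implicit Defensive.
From mathcomp Require Import lra ring zify.

Section Fourier2.
Variable R : realType.
Local Notation fn n := {ffun cube n -> R}.
Local Notation pm1 := (pm1 R).
Local Notation chi := (chi R).

Lemma pm1_sq b : pm1 b * pm1 b = 1.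
Proof. by case: b; rewrite /Defs.pm1 ?mulr1 ?mulrNN ?mulr1. Qed.

Lemma pm1_neq0 b : pm1 b != 0.
Proof. by case: b; rewrite /Defs.pm1 ?oppr_eq0 oner_eq0. Qed.

Variable n : nat.

Lemma sum_cube_prod (F : 'I_n -> bool -> R) :
  \sum_(x : cube n) \prod_i F i (x i) = \prod_i (F i true + F i false).
Proof.
rewrite -(eq_bigr _ (fun i _ => big_bool _ (F i))).
by rewrite bigA_distr_bigA.
Qed.

Lemma chi_prod (S : {set 'I_n}) (x : cube n) :
  chi S x = \prod_i (if i \in S then pm1 (x i) else 1).
Proof. by rewrite /Defs.chi ffunE big_mkcond. Qed.

Lemma sum_chi_chi (S T : {set 'I_n}) :
  \sum_(x : cube n) chi S x * chi T x = if S == T then 2 ^+ n else 0.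
Proof.
under eq_bigr => x _ do rewrite !chi_prod -big_split /=.
rewrite (sum_cube_prod (fun i b => (if i \in S then pm1 b else 1) *
                                   (if i \in T then pm1 b else 1))).
case: eqP => [->|/eqP neST].
  rewrite -[in RHS](card_ord n) -prodr_const; apply: eq_bigr => i _.
  by case: (i \in T); rewrite /Defs.pm1 ?mulr1 ?mulrNN ?mulr1.
have [i iST] : exists i, (i \in S) != (i \in T).
  apply/existsP; apply: contraR neST => /existsPn H.
  by apply/eqP/setP => i; move: (H i); case: (i \in S); case: (i \in T).
rewrite (bigD1 i) //= [X in X * _](_ : _ = 0) ?mul0r //.
by move: iST; case: (i \in S); case: (i \in T); rewrite //= /Defs.pm1 ?mulr1 ?mul1r // addrN.
Qed.

Lemma fhat_chi (T S : {set 'I_n}) : fhat (chi T) S = (S == T)%:R.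
Proof.
rewrite /fhat.
under eq_bigr => x _ do rewrite mulrC.
rewrite sum_chi_chi; case: eqP => _; last by rewrite mulr0.
by rewrite mulVf // expf_neq0 // pnatr_eq0.
Qed.

Lemma fhat_lin (a : R) (f g : fn n) S :
  fhat [ffun x => a * f x + g x] S = a * fhat f S + fhat g S.
Proof.
rewrite /fhat mulrCA -mulrDr; congr (_ * _).
rewrite mulr_sumr -big_split /=; apply: eq_bigr => x _.
by rewrite ffunE mulrDl mulrA.
Qed.

Lemma sum_chi_x_y (x y : cube n) :
  \sum_S chi S y * chi S x = if y == x then 2 ^+ n else 0.
Proof.
have -> : \sum_S chi S y * chi S x =
   \prod_i (pm1 (y i) * pm1 (x i) + 1).
  rewrite bigA_distr; apply: eq_bigr => S _.
  rewrite !chi_prod -big_split /=; apply: eq_bigr => i _.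
  by case: (i \in S); rewrite ?mulr1.
case: eqP => [->|/eqP neyx].
  rewrite -[in RHS](card_ord n) -prodr_const; apply: eq_bigr => i _.
  by rewrite pm1_sq.
have [i iyx] : exists i, y i != x i.
  apply/existsP; apply: contraR neyx => /existsPn H.
  by apply/eqP/ffunP => i; move: (H i); rewrite negbK => /eqP.
rewrite (bigD1 i) //= [X in X * _](_ : _ = 0) ?mul0r //.
by move: iyx; case: (y i); case: (x i); rewrite //= /Defs.pm1 ?mulr1 ?mulrN1 ?mulN1r ?opprK ?addNr ?addrN.
Qed.

Lemma fourier_inv (f : fn n) x : f x = \sum_S fhat f S * chi S x.
Proof.
rewrite /fhat.
rewrite (eq_bigr (fun S => (2^+n)^-1 * \sum_y f y * (chi S y * chi S x))); last first.
  move=> S _; rewrite -mulrA mulr_suml; congr (_ * _).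
  by apply: eq_bigr => y _; rewrite mulrA.
rewrite -mulr_sumr exchange_big /=.
rewrite (eq_bigr (fun y => f y * (if y == x then 2^+n else 0))); last first.
  by move=> y _; rewrite -mulr_sumr sum_chi_x_y.
rewrite (bigD1 x) //= eqxx big1 ?addr0; last first.
  by move=> y /negPf ->; rewrite mulr0.
by rewrite mulrC mulfK // expf_neq0 // pnatr_eq0.
Qed.

Lemma fhat_inj (f g : fn n) : (forall S, fhat f S = fhat g S) -> f = g.
Proof.
move=> H; apply/ffunP => x; rewrite (fourier_inv f) (fourier_inv g).
by apply: eq_bigr => S _; rewrite H.
Qed.

Lemma degP (f : fn n) k :
  reflect (forall S, fhat f S != 0 -> (#|S| <= k)%N) (deg f <= k)%N.
Proof. exact: bigmax_leqP. Qed.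

Lemma deg_ge (f : fn n) S : fhat f S != 0 -> (#|S| <= deg f)%N.
Proof. by move=> H; rewrite /deg; exact: (@leq_bigmax_cond _ _ (fun S : {set 'I_n} => #|S|) S H). Qed.

Lemma deg_chi (S : {set 'I_n}) : deg (chi S) = #|S|.
Proof.
apply/eqP; rewrite eqn_leq; apply/andP; split.
  by apply/degP => T; rewrite fhat_chi; case: (eqVneq T S) => [->//|_]; rewrite eqxx.
by apply: deg_ge; rewrite fhat_chi eqxx oner_eq0.
Qed.

Lemma deg_lin (a : R) (f g : fn n) k :
  (deg f <= k)%N -> (deg g <= k)%N -> (deg [ffun x => (a * f x + g x)%R] <= k)%N.
Proof.
move=> /degP Hf /degP Hg; apply/degP => S; rewrite fhat_lin.
case: (eqVneq (fhat f S) 0) => [->|/Hf //]; rewrite mulr0 add0r; exact: Hg.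
Qed.

End Fourier2.

Section DegU.
Variable R : realType.
Local Notation fn n := {ffun cube n -> R}.
Local Notation chi := (chi R).
Variable n : nat.

Lemma fhat0 S : fhat ([ffun => 0] : fn n) S = 0.
Proof. by rewrite /fhat big1 ?mulr0 // => x _; rewrite ffunE mul0r. Qed.

Lemma deg0 : deg ([ffun => 0] : fn n) = 0%N.
Proof. by apply/eqP; rewrite -leqn0; apply/degP => S; rewrite fhat0 eqxx. Qed.

Section Comb.
Variables (I : Type) (r : seq I) (v : I -> R) (F : I -> fn n).
Definition comb : fn n := [ffun x => \sum_(j <- r) v j * F j x].

Lemma fhat_comb S : fhat comb S = \sum_(j <- r) v j * fhat (F j) S.
Proof.
rewrite /comb; elim: r => [|j r' IH]; first by rewrite big_nil (_ : [ffun x => _] = [ffun => 0]) ?fhat0 //; apply/ffunP=> x; rewrite !ffunE big_nil.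
rewrite big_cons -IH -fhat_lin; congr fhat; apply/ffunP => x.
by rewrite !ffunE big_cons.
Qed.

Lemma deg_comb k : (forall j, v j != 0 -> (deg (F j) <= k)%N) -> (deg comb <= k)%N.
Proof.
move=> H; rewrite /comb; elim: r => [|j r' IH].
  by rewrite (_ : [ffun x => _] = [ffun => 0]) ?deg0 //; apply/ffunP => x; rewrite !ffunE big_nil.
rewrite (_ : [ffun x => _] = [ffun x => v j * F j x + [ffun x => \sum_(j <- r') v j * F j x] x]); last first.
  by apply/ffunP => x; rewrite !ffunE big_cons.
case: (eqVneq (v j) 0) => [->|/H Hj].
  rewrite (_ : [ffun x => _] = [ffun x => \sum_(j <- r') v j * F j x]) //.
  by apply/ffunP => x; rewrite !ffunE mul0r add0r.
by apply: deg_lin.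
Qed.
End Comb.
Arguments comb {I} r v F.

Variables (U Uinv : fn n -> fn n).
Hypothesis HU : basis_transform U Uinv.
Hypothesis Hc : compatible U.

Lemma U0 : U [ffun => 0] = [ffun => 0].
Proof.
case: HU => lin _.
have := lin (-1) [ffun => 0] [ffun => 0].
rewrite (_ : [ffun x => -1 * [ffun => (0:R)] x + [ffun => 0] x] = [ffun => 0]); last first.
  by apply/ffunP => x; rewrite !ffunE mulr0 addr0.
move=> ->; apply/ffunP => x; by rewrite !ffunE mulN1r addNr.
Qed.

Lemma U_comb (I : Type) (r : seq I) (v : I -> R) (F : I -> fn n) :
  U (comb r v F) = comb r v (fun j => U (F j)).
Proof.
rewrite /comb; elim: r => [|j r' IH].
  rewrite (_ : [ffun x => _] = [ffun => 0]) ?U0; last by apply/ffunP => x; rewrite !ffunE big_nil.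
  by apply/ffunP => x; rewrite !ffunE big_nil.
rewrite (_ : [ffun x => _] = [ffun x => v j * F j x + [ffun x => \sum_(j <- r') v j * F j x] x]); last first.
  by apply/ffunP => x; rewrite !ffunE big_cons.
case: HU => lin _; rewrite lin IH; apply/ffunP => x; by rewrite !ffunE big_cons.
Qed.

Lemma comb_fourier (f : fn n) : f = comb (enum {set 'I_n}) (fhat f) (fun S => chi S).
Proof.
by apply/ffunP => x; rewrite ffunE {1}(fourier_inv f x) big_enum.
Qed.

Lemma deg_U_le (f : fn n) : (deg (U f) <= deg f)%N.
Proof.
rewrite {1}(comb_fourier f) U_comb; apply: deg_comb => S HS.
by rewrite Hc; apply: deg_ge.
Qed.

Lemma deg_Uinv_chi (T : {set 'I_n}) : deg (Uinv (chi T)) = #|T|.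
Proof.
case: HU => lin [c1 c2].
pose k := #|T|.
pose Ik : {set {set 'I_n}} := finset (fun S : {set 'I_n} => (#|S| <= k)%N).
have TIk : T \in Ik by rewrite /Ik inE.
pose N := #|Ik|.
pose ix (j : 'I_N) : {set 'I_n} := enum_val j.
have ixIk j : ix j \in Ik by exact: enum_valP.
have ixk j : (#|ix j| <= k)%N by move: (ixIk j); rewrite /Ik inE.
have ixS S : S \in Ik -> ix (enum_rank_in TIk S) = S by move=> H; rewrite /ix enum_rankK_in.
have ixinj : injective ix by exact: enum_val_inj.
pose M : 'M[R]_N := \matrix_(i, j) fhat (U (chi (ix i))) (ix j).
have degkfhat (G : fn n) S : (deg G <= k)%N -> S \notin Ik -> fhat G S = 0.
  move=> dG; rewrite /Ik inE -ltnNge => kS; apply/eqP; apply: contraTT kS => H.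
  by rewrite -leqNgt (leq_trans (deg_ge H)).
have detM : \det M != 0.
  apply/negP => /det0P [v vn0 vM].
  pose g := comb (enum 'I_N) (fun i => v 0 i) (fun i => chi (ix i)).
  have Ug : U g = [ffun => 0].
    apply: fhat_inj => S; rewrite fhat0.
    have dUg : (deg (U g) <= k)%N.
      by rewrite U_comb; apply: deg_comb => j _; rewrite Hc.
    case: (boolP (S \in Ik)) => SIk; last exact: degkfhat.
    rewrite -(ixS _ SIk) U_comb fhat_comb big_enum /=.
    have := congr1 (fun A : 'M[R]_(1,N) => A 0 (enum_rank_in TIk S)) vM.
    rewrite !mxE => H; rewrite -[X in _ = X]H; by apply: eq_bigr => i _; rewrite mxE.
  have g0 : g = [ffun => 0] by rewrite -(c1 g) Ug -{1}U0 c1.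
  move/negP: vn0; apply; apply/eqP/rowP => j; rewrite mxE.
  have := congr1 (fun G => fhat G (ix j)) g0; rewrite /= fhat0 fhat_comb big_enum /=.
  rewrite (bigD1 j) //= big1 ?addr0; first by rewrite fhat_chi eqxx mulr1.
  by move=> i /negPf nij; rewrite fhat_chi (inj_eq ixinj) eq_sym nij mulr0.
have Mu : M \in unitmx by rewrite unitmxE unitfE.
pose t := enum_rank_in TIk T.
pose f := comb (enum 'I_N) (fun j => invmx M t j) (fun j => chi (ix j)).
have Uf : U f = chi T.
  apply: fhat_inj => S.
  have dUf : (deg (U f) <= k)%N.
    by rewrite U_comb; apply: deg_comb => j _; rewrite Hc.
  case: (boolP (S \in Ik)) => SIk; last first.
    rewrite degkfhat // fhat_chi; case: eqP => // ST.
    by move: SIk; rewrite ST TIk.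
  rewrite -(ixS _ SIk) U_comb fhat_comb big_enum /=.
  have := congr1 (fun A : 'M[R]_N => A t (enum_rank_in TIk S)) (mulVmx Mu).
  rewrite !mxE => Hm.
  rewrite (eq_bigr (fun j => invmx M t j * M j (enum_rank_in TIk S))); last first.
    by move=> j _; rewrite mxE.
  rewrite Hm fhat_chi; have -> // : (ix (enum_rank_in TIk S) == T) = (t == enum_rank_in TIk S).
  apply/eqP/eqP => H.
    by apply: ixinj; rewrite H /t (ixS _ TIk).
  by rewrite -H /t (ixS _ TIk).
have Uinvf : Uinv (chi T) = f by rewrite -Uf c1.
apply/eqP; rewrite eqn_leq; apply/andP; split.
  by rewrite Uinvf; apply: deg_comb => j _; apply: (leq_trans _ (ixk j)); rewrite deg_chi.
by rewrite -{1}(deg_chi R T) -{1}(c2 (chi T)) deg_U_le.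
Qed.

Lemma degU_deg (f : fn n) : degU Uinv f = deg f.
Proof. by rewrite /degU [RHS]/deg; apply: eq_bigr => S _; rewrite deg_Uinv_chi. Qed.

End DegU.

Section Dictator.
Variable R : realType.
Local Notation fn n := {ffun cube n -> R}.
Local Notation pm1 := (pm1 R).
Local Notation chi := (chi R).
Variable n : nat.

Definition flip (j : 'I_n) (x : cube n) : cube n :=
  [ffun i => if i == j then ~~ x i else x i].

Lemma pm1_neg b : pm1 (~~ b) = - pm1 b.
Proof. by case: b; rewrite /Defs.pm1 ?opprK. Qed.

Lemma pm1_inj : injective pm1.
Proof. by case; case; rewrite /Defs.pm1 // => H; exfalso; move: H; lra. Qed.

Lemma pm1_xor b1 b2 b3 : pm1 b1 = pm1 b2 * pm1 b3 -> b1 = xorb (~~ b2) b3.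
Proof.
by case: b1; case: b2; case: b3; rewrite /Defs.pm1 ?mulr1 ?mulrN1 ?mulN1r ?opprK //= => H; exfalso; move: H; lra.
Qed.

Lemma small_set (S : {set 'I_n}) j : (#|S| <= 1)%N -> j \in S -> S = [set j]%SET.
Proof.
move=> /card_le1P H jS; apply/setP => i; rewrite inE.
by rewrite (H j jS).
Qed.

Lemma dictator (c : cube n -> bool) :
  (deg [ffun x => pm1 (c x)] <= 1)%N ->
  (exists b, forall x, c x = b) \/ exists j b, forall x, c x = xorb b (x j).
Proof.
set f := [ffun x => pm1 (c x)] => df.
have fS S : fhat f S != 0 -> (#|S| <= 1)%N by move=> H; apply: leq_trans df; apply: deg_ge.
have D j x : f x - f (flip j x) = 2 * fhat f [set j]%SET * pm1 (x j).
  rewrite (fourier_inv f x) (fourier_inv f (flip j x)) -sumrB.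
  rewrite (bigD1 [set j]%SET) //= big1 ?addr0.
    rewrite !chi_prod (bigD1 j) //= big1 ?mulr1; last by move=> i ij; rewrite inE (negPf ij).
    rewrite (bigD1 j) //= big1 ?mulr1; last by move=> i ij; rewrite inE (negPf ij).
    by rewrite !inE eqxx /flip ffunE eqxx pm1_neg; ring.
  move=> S nSj; case: (eqVneq (fhat f S) 0) => [->|/fS HS]; first by rewrite !mul0r subrr.
  case: (boolP (j \in S)) => jS; first by move: nSj; rewrite (small_set HS jS) eqxx.
  rewrite -mulrBr [chi S (flip j x)](_ : _ = chi S x) ?subrr ?mulr0 //.
  rewrite /Defs.chi !ffunE; apply: eq_bigr => i iS; rewrite /flip ffunE.
  by case: eqP => // eij; move: jS; rewrite -eij iS.
case: (boolP [forall j, fhat f [set j]%SET == 0]) => [/forallP H0|].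
  left; exists (c [ffun => true]) => x; apply: pm1_inj.
  have E y : f y = fhat f finset.set0.
    rewrite (fourier_inv f y) (bigD1 finset.set0) //= big1 ?addr0.
      by rewrite /Defs.chi ffunE big_set0 mulr1.
    move=> S nS0; case: (eqVneq (fhat f S) 0) => [->|/fS HS]; first by rewrite mul0r.
    have [j jS] : exists j, j \in S.
      by apply/set0Pn.
    by rewrite (small_set HS jS) (eqP (H0 j)) mul0r.
  by have := E x; have := E [ffun => true]; rewrite !ffunE => -> ->.
move/forallPn => [j /negP Hj]; right.
have Hx x : pm1 (c x) = fhat f [set j]%SET * pm1 (x j).
  have := D j x; rewrite /f !ffunE.
  case: (c x); case: (c (flip j x)); rewrite /Defs.pm1 => H.
  - by exfalso; apply: Hj; apply/eqP; move: H (pm1_neq0 R (x j)); rewrite subrr /Defs.pm1; case: (x j) => ? ?; lra.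
  - by move: H; case: (x j) => H; lra.
  - by move: H; case: (x j) => H; lra.
  - by exfalso; apply: Hj; apply/eqP; move: H (pm1_neq0 R (x j)); rewrite subrr /Defs.pm1; case: (x j) => ? ?; lra.
exists j, (~~ c [ffun => true]) => x; apply: pm1_xor.
rewrite (Hx [ffun => true]) ffunE [pm1 true]/Defs.pm1 mulr1; exact: Hx.
Qed.

End Dictator.

Section Level.
Variable R : realType.
Variables (d : nat) (V : {fset R}).
Variables (tau ti : cube d -> cube d).
Hypothesis tauK : cancel ti tau.

Definition compt (h : {ffun cube d -> V}) : {ffun cube d -> V} := [ffun z => h (tau z)].

Lemma compt_inj : injective compt.
Proof.
move=> h1 h2 /ffunP H; apply/ffunP => z.
by have := H (ti z); rewrite !ffunE tauK.
Qed.

Lemma level (K : nat) :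
  (\sum_(h in Fk d V K) deg (taskval h) + #|(compt @: Fk d V K) :\: Fk d V K|
    <= \sum_(h in Fk d V K) deg (taskval (compt h)))%N.
Proof.
set F := Fk d V K; set G := compt @: F.
pose D (g : {ffun cube d -> V}) := deg (taskval g).
rewrite -(big_imset D (in2W compt_inj)) /= -/G.
rewrite [in X in (_ <= X)%N](big_setID F) [in X in (X + _ <= _)%N](big_setID G) /= (finset.setIC G F).
have cG : #|G| = #|F| by rewrite card_imset //; exact: compt_inj.
have cx : #|G :\: F| = #|F :\: G|.
  by have := cardsID F G; have := cardsID G F; rewrite finset.setIC cG => <- /eqP; rewrite eqn_add2l => /eqP.
have HB : (#|G :\: F| * K.+1 <= \sum_(i in G :\: F) D i)%N.
  rewrite -sum_nat_const; apply: leq_sum => g; rewrite !inE -ltnNge.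
  by case/andP.
have HC : (\sum_(i in F :\: G) D i <= #|F :\: G| * K)%N.
  rewrite -sum_nat_const; apply: leq_sum => g; rewrite !inE.
  by case/andP.
rewrite -addnA leq_add2l; rewrite cx in HB *.
apply: leq_trans HB; rewrite mulnS addnC leq_add2l.
exact: HC.
Qed.

End Level.

Section SecondMoment.
Context d (T : measurableType d) (R : realType) (P : probability T R).
Local Open Scope ereal_scope.

Lemma int_comb (I : finType) (c : I -> R) (A : I -> set T) :
  (forall i, measurable (A i)) ->
  \int[P]_w (\sum_i c i * \1_(A i) w)%:E = (\sum_i c i * fine (P (A i)))%:E.
Proof.
move=> mA.
under eq_integral do rewrite -sumEFin.
rewrite integral_sum //; last first.
  move=> i; apply: (eq_integrable _ (fun w => (c i)%:E * (\1_(A i) w)%:E)); first done.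
    by move=> w _; rewrite EFinM.
  by apply: integrableZl => //; apply: integrable_indic.
rewrite -sumEFin; apply: eq_bigr => i _.
under eq_integral do rewrite EFinM.
rewrite integralZl //; last exact: integrable_indic.
by rewrite integral_indic // setIT EFinM fineK // fin_num_measure.
Qed.

End SecondMoment.

Section SecondMoment2.
Context d (T : measurableType d) (R : realType) (P : probability T R).
Variables (B : nat -> set T) (q : R).
Hypothesis mB : forall i, measurable (B i).
Hypothesis PB : forall i, P (B i) = q%:E.
Hypothesis PBB : forall i j, i != j -> P (B i `&` B j) = (q * q)%:E.

Lemma q01 : 0 <= q <= 1.
Proof.
apply/andP; split.
  by rewrite -lee_fin -(PB 0) measure_ge0.
by rewrite -lee_fin -(PB 0) probability_le1.
Qed.

Lemma sum_pairE (I J : finType) (F : I * J -> R) :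
  \sum_(k : I * J) F k = \sum_i \sum_j F (i, j).
Proof. by rewrite pair_bigA; apply: eq_bigr => -[]. Qed.

Definition Sn n w := \sum_(i < n) \1_(B i) w : R.

Lemma measurable_Sn n : measurable_fun setT (Sn n).
Proof. by apply: measurable_sum => i; apply: measurable_indic. Qed.

Definition cc n (k : 'I_n * 'I_n * 'I_4) : R :=
  match nat_of_ord k.2 with 0 => 1 | 1 => - q | 2 => - q | _ => q * q end.
Definition AA n (k : 'I_n * 'I_n * 'I_4) : set T :=
  match nat_of_ord k.2 with 0 => B k.1.1 `&` B k.1.2 | 1 => B k.1.1 | 2 => B k.1.2 | _ => setT end.

Lemma Y2_comb n w :
  (Sn n w - n%:R * q) ^+ 2 = \sum_(k : 'I_n * 'I_n * 'I_4) cc k * \1_(AA k) w.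
Proof.
have -> : Sn n w - n%:R * q = \sum_(i < n) (\1_(B i) w - q).
  by rewrite sumrB sumr_const card_ord mulr_natl.
rewrite expr2 mulr_suml.
rewrite !sum_pairE /=; apply: eq_bigr => i _.
rewrite mulr_sumr; apply: eq_bigr => j _.
rewrite !big_ord_recr big_ord0 /= /cc /AA /=.
rewrite (indicI R (B i) (B j)) indicT /=.
ring.
Qed.

Lemma measurable_AA n k : measurable (@AA n k).
Proof. by rewrite /AA; case: (nat_of_ord k.2) => [|[|[|m]]] //=; apply: measurableI. Qed.

Lemma EY2 n : (\int[P]_w ((Sn n w - n%:R * q) ^+ 2)%:E = (n%:R * (q - q * q))%:E)%E.
Proof.
under eq_integral do rewrite Y2_comb.
rewrite int_comb; last exact: measurable_AA.
congr (_%:E).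
rewrite !sum_pairE /=.
rewrite mulr_natl -[in RHS](card_ord n) -sumr_const; apply: eq_bigr => i _.
rewrite (bigD1 i) //= [X in _ + X]big1 ?addr0.
  rewrite !big_ord_recr big_ord0 /= /cc /AA /= setIid PB probability_setT /=.
  ring.
move=> j ij.
rewrite !big_ord_recr big_ord0 /= /cc /AA /= PBB 1?eq_sym // PB PB probability_setT /=.
ring.
Qed.

Lemma chebyshev_Sn (n : nat) (t : R) : 0 < t ->
  (P [set w | (t <= `|Sn n w - n%:R * q|)%R] <= ((n%:R * (q - q * q) / t ^+ 2)%R)%:E)%E.
Proof.
move=> t0.
set E := [set w | t <= `|Sn n w - n%:R * q|].
have mE : measurable E.
  have := @measurable_fun_le _ _ _ setT (cst t) (fun w => `|Sn n w - n%:R * q|) measurableT.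
  rewrite setTI; apply => //.
  apply: measurableT_comp => //; apply: measurable_funB => //; exact: measurable_Sn.
have H : ((t ^+ 2)%:E * P E <= (n%:R * (q - q * q))%:E)%E.
  rewrite -EY2.
  have -> : ((t ^+ 2)%:E * P E = \int[P]_w ((t ^+ 2) * \1_E w)%:E)%E.
    under eq_integral do rewrite EFinM.
    by rewrite integralZl // ?integral_indic ?setIT //; apply: integrable_indic.
  apply: ge0_le_integral => //.
  - by move=> w _; rewrite lee_fin mulr_ge0 // ?sqr_ge0.
  - apply/measurable_EFinP; apply: measurable_funM => //; exact: measurable_indic.
  - apply/measurable_EFinP; apply: measurable_funX; apply: measurable_funB => //; exact: measurable_Sn.
  - move=> w _; rewrite lee_fin /indic; case: (boolP (w \in E)) => [/set_mem wE|_] /=.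
      rewrite mulr1n mulr1 -[X in _ <= X]ger0_norm ?sqr_ge0 // normrX.
      by rewrite lerXn2r ?nnegrE ?(ltW t0) //.
    by rewrite mulr0n mulr0 sqr_ge0.
by rewrite mulrC EFinM lee_pdivlMl ?exprn_gt0.
Qed.

End SecondMoment2.

Lemma sq_bracket K n : ((K.+1) ^ 2 <= n)%N ->
  exists2 k, (K <= k)%N & ((k.+1) ^ 2 <= n < (k.+2) ^ 2)%N.
Proof.
elim: n => [|n IH]; first by rewrite expnS.
move=> Hn; case: (leqP ((K.+1) ^ 2) n) => Hn'.
  have [k Kk /andP [h1 h2]] := IH Hn'.
  case: (ltnP n.+1 ((k.+2) ^ 2)) => h3.
    by exists k => //; rewrite h3 andbT; apply: leqW.
  exists k.+1; first exact: leqW.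
  apply/andP; split => //.
  have : n.+1 = ((k.+2) ^ 2)%N by apply/eqP; rewrite eqn_leq h3 h2.
  move=> ->; rewrite !expnS !expn0 !muln1; nia.
exists K => //; apply/andP; split => //.
have : n.+1 = ((K.+1) ^ 2)%N by apply/eqP; rewrite eqn_leq Hn Hn'.
move=> ->; rewrite !expnS !expn0 !muln1; nia.
Qed.

Section Sandwich.
Variable R : realType.

Lemma sandwich (S : nat -> R) (q : R) :
  (forall n, S n <= S n.+1) -> 0 <= q <= 1 ->
  (forall e, 0 < e -> exists K, forall k, (K <= k)%N ->
      `|S ((k.+1) ^ 2)%N - ((k.+1) ^ 2)%N%:R * q| <= e * ((k.+1) ^ 2)%N%:R) ->
  (fun n => n%:R^-1 * S n) @ \oo --> q.
Proof.
move=> Smono /andP [q0 q1] H.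
have Sle m n : (m <= n)%N -> S m <= S n.
  move=> mn; rewrite -(subnKC mn); elim: (n - m)%N => [|k IH]; first by rewrite addn0.
  by rewrite addnS (le_trans IH).
apply/cvgrPdist_le => e e0.
have [K HK] := H (e / 8) (divr_gt0 e0 (ltr0Sn R 7)).
pose K' := Num.bound (6 / e).
have HK' : 6 / e < K'%:R by apply: archi_boundP; rewrite divr_ge0 // ltW.
exists ((maxn K K').+1 ^ 2)%N => // n /= Hn.
have [k Kk /andP [kn1 kn2]] := sq_bracket Hn.
have kK : (K <= k)%N by apply: leq_trans Kk; rewrite leq_maxl.
have kK' : (K' <= k)%N by apply: leq_trans Kk; rewrite leq_maxr.
have ha := HK k kK.
have hb := HK k.+1 (leqW kK).
have S1 := Sle _ _ kn1.
have S2 := Sle _ _ (ltnW kn2).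
set x := (k.+1)%:R : R.
have x1 : 1 <= x by rewrite /x ler1n.
have xe : 6 <= e * x.
  have : 6 / e < x.
    by apply: (lt_le_trans HK'); rewrite /x ler_nat; apply: leqW.
  by rewrite ltr_pdivrMr // mulrC => /ltW.
have eA : ((k.+1) ^ 2)%N%:R = x * x by rewrite /x -natrM expnS expn1.
have eB : ((k.+2) ^ 2)%N%:R = (x + 1) * (x + 1) by rewrite /x natr1 -natrM expnS expn1.
rewrite eA in ha; rewrite eB in hb.
have hN1 : x * x <= n%:R by rewrite -eA ler_nat.
have hN2 : n%:R <= (x + 1) * (x + 1) by rewrite -eB ler_nat ltnW.
have N0 : 0 < n%:R :> R by apply: lt_le_trans hN1; nra.
have -> : q - n%:R^-1 * S n = (q * n%:R - S n) / n%:R.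
  by field; rewrite gt_eqF.
rewrite normrM normfV (gtr0_norm N0) ler_pdivrMr // ler_norml.
move: ha hb; rewrite !ler_norml => /andP [ha1 ha2] /andP [hb1 hb2].
have f1 : q * (x * x) <= q * n%:R by rewrite ler_wpM2l.
have f2 : q * n%:R <= q * ((x + 1) * (x + 1)) by rewrite ler_wpM2l.
have f3 : e * ((x + 1) * (x + 1)) <= 4 * (e * (x * x)) by nra.
have f4 : 2 * x + 1 <= e * (x * x) / 2 by nra.
have f5 : e * (x * x) <= e * n%:R by rewrite ler_wpM2l // ltW.
apply/andP; split; nra.
Qed.

End Sandwich.

Section Series.
Variable R : realType.
Local Open Scope ereal_scope.

Lemma tel_sum (n : nat) :
  (\sum_(0 <= k < n) ((k.+1)%:R^-1 - (k.+2)%:R^-1) = 1 - (n.+1)%:R^-1 :> R)%R.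
Proof.
elim: n => [|n IH]; first by rewrite big_geq // invr1 subrr.
by rewrite big_nat_recr //= IH addrA subrK.
Qed.

Lemma series_sq_lty (c : R) : (0 <= c)%R ->
  \sum_(0 <= k <oo) ((c / ((k.+1) ^ 2)%N%:R)%:E) < +oo.
Proof.
move=> c0.
have u0 : forall k, 0 <= ((c / ((k.+1) ^ 2)%N%:R)%:E : \bar R).
  by move=> k; rewrite lee_fin divr_ge0.
apply: (@le_lt_trans _ _ (\sum_(0 <= k <oo) ((2 * c * ((k.+1)%:R^-1 - (k.+2)%:R^-1))%:E))).
  apply: lee_nneseries => [k _ _|k _]; first exact: u0.
  rewrite lee_fin.
  have k1 : (0 < (k.+1)%:R :> R)%R by [].
  have k2 : (0 < (k.+2)%:R :> R)%R by [].
  have -> : ((k.+1) ^ 2)%N%:R = ((k.+1)%:R * (k.+1)%:R :> R)%R by rewrite -natrM expnS expn1.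
  rewrite -[(k.+2)%:R]natr1 -[(k.+1)%:R]natr1.
  set x := (k%:R : R).
  have x0 : (0 <= x)%R by [].
  rewrite ler_pdivrMr; last by nra.
  have -> : ((x + 1)^-1 - (x + 1 + 1)^-1 = ((x + 1) * (x + 1 + 1))^-1 :> R)%R.
    by field; apply/andP; split; apply/negP => /eqP H; nra.
  rewrite -mulrA.
  have -> : (2 * (c / ((x + 1) * (x + 1 + 1))) * ((x + 1) * (x + 1)) = c * (2 * (x + 1) / (x + 1 + 1)) :> R)%R.
    by field; apply/andP; split; apply/negP => /eqP H; nra.
  rewrite -[X in (X <= _)%R]mulr1; apply: ler_wpM2l => //.
  by rewrite ler_pdivlMr; nra.
apply: (@le_lt_trans _ _ (2 * c)%:E); last exact: ltry.
apply: lime_le.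
  by apply: is_cvg_nneseries => k _ _; rewrite lee_fin; apply: mulr_ge0; [nra|rewrite subr_ge0 lef_pV2 ?posrE // ler_nat].
apply: nearW => n; rewrite sumEFin lee_fin -mulr_sumr tel_sum.
by rewrite ler_piMr ?mulr_ge0 // gerBl invr_ge0.
Qed.

End Series.

Section SLLN.
Context d (T : measurableType d) (R : realType) (P : probability T R).
Variables (B : nat -> set T) (q : R).
Hypothesis mB : forall i, measurable (B i).
Hypothesis PB : forall i, P (B i) = q%:E.
Hypothesis PBB : forall i j, i != j -> P (B i `&` B j) = (q * q)%:E.

Lemma measurable_dev (n : nat) (t : R) :
  measurable [set w | (t <= `|Sn R B n w - n%:R * q|)%R].
Proof.
have := @measurable_fun_le _ _ _ setT (cst t) (fun w => `|Sn R B n w - n%:R * q|) measurableT.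
rewrite setTI; apply => //.
apply: measurableT_comp => //; apply: measurable_funB => //; exact: measurable_Sn.
Qed.

Theorem slln : {ae P, forall w, (fun n => n%:R^-1 * Sn R B n w) @ \oo --> q}.
Proof.
have /andP [q0 q1] := q01 mB PB.
pose E m k := [set w | ((m.+1%:R)^-1 * ((k.+1) ^ 2)%N%:R <=
                 `|Sn R B ((k.+1) ^ 2)%N w - ((k.+1) ^ 2)%N%:R * q|)%R].
have mE m k : measurable (E m k) by apply: measurable_dev.
have PE m k : (P (E m k) <= ((m.+1%:R ^+ 2) / ((k.+1) ^ 2)%N%:R)%:E)%E.
  have t0 : (0 < (m.+1%:R)^-1 * ((k.+1) ^ 2)%N%:R :> R)%R.
    by rewrite mulr_gt0 // ?invr_gt0 // ltr0n expn_gt0.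
  apply: le_trans (chebyshev_Sn mB PB PBB _ t0) _; rewrite lee_fin.
  set N := ((k.+1) ^ 2)%N%:R; set M := m.+1%:R.
  have N0 : (0 < N :> R)%R by rewrite ltr0n expn_gt0.
  have M0 : (0 < M :> R)%R by rewrite ltr0n.
  have -> : (N * (q - q * q) / (M^-1 * N) ^+ 2 = (q - q * q) * (M ^+ 2 / N) :> R)%R.
    by field; apply/andP; split; rewrite gt_eqF.
  rewrite -[X in (_ <= X)%R]mul1r; apply: ler_wpM2r; first by rewrite divr_ge0 // ?sqr_ge0 ?ltW.
  nra.
have BC m : P (lim_sup_set (E m)) = 0.
  apply: lim_sup_set_cvg0 => //.
  apply: le_lt_trans (series_sq_lty (sqr_ge0 (m.+1%:R : R))).
  by apply: lee_nneseries => [k _ _|k _]; [exact: measure_ge0 | exact: PE].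
apply: (negligibleS _ (negligible_bigcup (fun m => _ : P.-negligible (lim_sup_set (E m))))).
  move=> w /= nQ; apply: contrapT => H; apply: nQ.
  apply: sandwich => //; last 2 first.
  - by apply/andP.
  - move=> e e0.
    pose m := Num.bound (e^-1).
    have em : ((m.+1%:R)^-1 <= e :> R)%R.
      rewrite -[X in (_ <= X)%R]invrK lef_pV2 ?posrE ?invr_gt0 //.
      apply: ltW; apply: (lt_le_trans (archi_boundP _)); first by rewrite invr_ge0 ltW.
      by rewrite ler_nat.
    have : ~ lim_sup_set (E m) w by move=> Hm; apply: H; exists m.
    rewrite /lim_sup_set => /existsNP [K HK].
    exists K => k Kk.
    have : ~ E m k w by move=> Ek; apply: HK; exists k.
    rewrite /E /= => /negP; rewrite -ltNge => /ltW Hk.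
    apply: le_trans Hk _; apply: ler_wpM2r => //.
  - move=> n; rewrite /Sn big_ord_recr /= lerDl.
    by rewrite /indic; case: (_ \in _).
move=> m; exists (lim_sup_set (E m)); split => //.
apply: bigcap_measurable; first by exists 0%N.
by move=> k _; apply: bigcup_measurable.
Qed.

End SLLN.

Section Assembly.
Variable R : realType.

Lemma cvg_sum_seq (I : Type) (r : seq I) (f : I -> nat -> R) (l : I -> R) :
  (forall i, f i n @[n --> \oo] --> l i) ->
  (\sum_(i <- r) f i n) @[n --> \oo] --> \sum_(i <- r) l i.
Proof.
move=> H; elim: r => [|i r IH].
  by under eq_fun do rewrite big_nil; rewrite big_nil; exact: cvg_cst.
under eq_fun do rewrite big_cons; rewrite big_cons.
exact: cvgD.
Qed.

Lemma cvg_inv_nat : (n%:R^-1 : R) @[n --> \oo] --> 0.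
Proof.
apply/cvgrPdist_le => e e0.
exists (Num.bound (e^-1)).+1 => // n /= Hn.
rewrite sub0r normrN ger0_norm ?invr_ge0 //.
have n0 : (0 < n%:R :> R) by rewrite ltr0n (leq_trans _ Hn).
rewrite -[X in _ <= X]invrK lef_pV2 ?posrE ?invr_gt0 //.
apply: ltW; apply: (lt_le_trans (archi_boundP _)); first by rewrite invr_ge0 ltW.
by rewrite ler_nat ltnW.
Qed.

Variables (d m : nat) (V : {fset R}) (psi : cube d -> cube m).

Definition compt' (tau : cube d -> cube d) (h : {ffun cube d -> V}) : {ffun cube d -> V} :=
  [ffun z => h (tau z)].

Lemma gfun_comp (Phi : {ffun cube m -> cube d}) (tau : cube d -> cube d) h :
  cancel (fun z => Phi (psi z)) tau -> cancel tau (fun z => Phi (psi z)) ->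
  gfun psi Phi h = taskval (compt' tau h).
Proof.
move=> c1 c2; apply/ffunP => y; rewrite !ffunE.
case: pickP => [z /eqP Hz | H].
  by rewrite -Hz c1.
by have := H (tau y); rewrite c2 eqxx.
Qed.

End Assembly.

Lemma pm1_xorb (R : realType) b x : pm1 R (xorb b x) = pm1 R (~~ b) * pm1 R x.
Proof. by case: b; case: x; rewrite /pm1 /= ?mulr1 ?mul1r ?mulrN1 ?opprK. Qed.

Lemma min_part (R : realType) (d m : nat) (psi : cube d -> cube m)
  (V : {fset R}) (p : 'I_d -> R)
  (Ud Udinv : {ffun cube d -> R} -> {ffun cube d -> R}) :
  (0 < d)%N -> injective psi -> (-1 \in V) -> (1 \in V) ->
  (forall k, 0 < p k < 1) ->
  basis_transform Ud Udinv -> compatible Ud ->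
  let Lf Phi := \sum_(a : 'I_d * {ffun cube d -> V})
      (degU Udinv (gfun psi Phi a.2))%:R *
      (p a.1 * (if a.2 \in Fk d V a.1.+1 then (#|Fk d V a.1.+1|%:R)^-1 else 0)) in
  forall Phis, admissible psi Phis ->
  (forall Phi, admissible psi Phi -> Lf Phis <= Lf Phi) ->
  exists (pi : {perm 'I_d}) (s : 'I_d -> R),
    (forall j, s j = 1 \/ s j = -1) /\
    (forall (j : 'I_d) (z : cube d),
       pm1 R (Phis (psi z) j) = s j * pm1 R (z (pi j))).
Proof.
move=> hd psiI Vm1 V1 hp HUd Hcd Lf Phis admS minS.
pose W (k : 'I_d) : R := p k * (#|Fk d V k.+1|%:R)^-1.
have LE Phi : Lf Phi = \sum_k W k * \sum_(h in Fk d V k.+1) (deg (gfun psi Phi h))%:R.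
  rewrite /Lf sum_pairE; apply: eq_bigr => k _.
  rewrite mulr_sumr [RHS]big_mkcond /=; apply: eq_bigr => h _.
  rewrite (degU_deg HUd Hcd); case: (h \in _); last by rewrite !mulr0.
  by rewrite /W mulrC.
pose y0 : cube d := [ffun => true].
pose Phi0 : {ffun cube m -> cube d} :=
  [ffun y => if [pick z | psi z == y] is Some z then z else y0].
have Phi0E z : Phi0 (psi z) = z.
  rewrite ffunE; case: pickP => [z' /eqP /psiI -> //| H].
  by have := H z; rewrite eqxx.
have adm0 : admissible psi Phi0 by exists id => z; rewrite /= Phi0E.
have gfun0 h : gfun psi Phi0 h = taskval h.
  rewrite (@gfun_comp _ _ _ _ _ _ id) => [|z|z]; rewrite /= ?Phi0E //.
  by apply/ffunP => z; rewrite !ffunE.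
case: (admS) => tau c1 c2.
have gfunS h : gfun psi Phis h = taskval (compt tau h) by exact: gfun_comp.
pose F1 := Fk d V 1.
pose hi (i : 'I_d) : {ffun cube d -> V} := [ffun z : cube d => if z i then [` V1]%fset else [` Vm1]%fset].
have hiF i : hi i \in F1.
  rewrite inE; have -> : taskval (hi i) = chi R [set i]%SET.
    by apply/ffunP => z; rewrite !ffunE big_set1; case: (z i).
  by rewrite deg_chi cards1.
pose k0 : 'I_d := Ordinal hd.
have cnt0 : #|compt tau @: F1 :\: F1| = 0%N.
  have Hmin := minS Phi0 adm0.
  rewrite !LE in Hmin.
  pose c k := (#|compt tau @: Fk d V k.+1 :\: Fk d V k.+1|)%:R : R.
  pose S0 k := \sum_(h in Fk d V k.+1) (deg (gfun psi Phi0 h))%:R : R.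
  pose SS k := \sum_(h in Fk d V k.+1) (deg (gfun psi Phis h))%:R : R.
  have lev k : S0 k + c k <= SS k.
    rewrite /S0 /SS /c.
    under eq_bigr do rewrite gfun0.
    under [X in _ <= X]eq_bigr do rewrite gfunS.
    rewrite -!natr_sum -natrD ler_nat; exact: (level V c1).
  have W0 k : 0 <= W k.
    by rewrite /W mulr_ge0 // ?invr_ge0 //; case/andP: (hp k) => /ltW.
  have H1 : \sum_k (W k * S0 k + W k * c k) <= \sum_k W k * SS k.
    by apply: ler_sum => k _; rewrite -mulrDr; apply: ler_wpM2l.
  rewrite big_split /= in H1.
  have H2 : \sum_k W k * c k <= 0.
    move: Hmin H1; rewrite -/(S0 _) -/(SS _).
    have -> : \sum_k W k * \sum_(h in Fk d V k.+1) (deg (gfun psi Phis h))%:R = \sum_k W k * SS k by [].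
    have -> : \sum_k W k * \sum_(h in Fk d V k.+1) (deg (gfun psi Phi0 h))%:R = \sum_k W k * S0 k by [].
    lra.
  have H3 : W k0 * c k0 <= 0.
    apply: le_trans H2; rewrite (bigD1 k0) //= lerDl.
    by apply: sumr_ge0 => k _; apply: mulr_ge0.
  have Wk0 : 0 < W k0.
    rewrite /W mulr_gt0 //; first by case/andP: (hp k0).
    rewrite invr_gt0 ltr0n card_gt0; apply/set0Pn; exists (hi k0); exact: hiF.
  have : c k0 <= 0 by rewrite -(pmulr_rle0 _ Wk0).
  by rewrite /c lern0 => /eqP.
have hiC i : compt tau (hi i) \in F1.
  apply: contraT => H.
  have : compt tau (hi i) \in compt tau @: F1 :\: F1 by rewrite inE H imset_f.
  by move/eqP: cnt0; rewrite cards_eq0 => /eqP ->; rewrite inE.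
have dicti i : exists jb : 'I_d * bool, forall z, tau z i = xorb jb.2 (z jb.1).
  have := hiC i; rewrite inE => Hdeg.
  have E : taskval (compt tau (hi i)) = [ffun z => pm1 R (tau z i)].
    by apply/ffunP => z; rewrite !ffunE; case: (tau z i).
  rewrite E in Hdeg; case: (dictator Hdeg) => [[b Hb]|[j [b Hb]]]; last by exists (j, b).
  exfalso; pose y : cube d := [ffun => ~~ b].
  have := Hb (Phis (psi y)); rewrite c1 /y ffunE.
  by case: (b).
have [f Hf] := fin_all_exists dicti.
have piinj : injective (fun i => (f i).1).
  move=> i1 i2 /= Heq; apply/eqP; apply: contraT => ne.
  pose y : cube d := [ffun k => if k == i2 then ~~ (xorb (f i1).2 (f i2).2) else false].
  have := Hf i1 (Phis (psi y)); have := Hf i2 (Phis (psi y)).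
  rewrite c1 -Heq; set x := Phis (psi y) (f i1).1; clearbody x.
  rewrite /y !ffunE eqxx (negbTE ne).
  by case: ((f i1).2); case: ((f i2).2); case: x.
pose pp := perm piinj.
exists pp^-1%g, (fun j => pm1 R (~~ (f (pp^-1%g j)).2)); split.
  by move=> j; case: (~~ _); [left|right].
move=> j z.
have := Hf (pp^-1%g j) (Phis (psi z)); rewrite c1.
have -> : (f (pp^-1%g j)).1 = j by have := permKV pp j; rewrite permE.
move=> ->.
by case: (f (pp^-1%g j)).2; case: (Phis (psi z) j); rewrite /pm1 /= ?mulr1 ?mul1r ?mulrN1 ?mulN1r ?opprK.
Qed.

Unset Implicit Arguments.

Theorem theorem6 (R : realType) (d m : nat) (psi : cube d -> cube m)
  (V : {fset R}) (p : 'I_d -> R)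
  (Ud Udinv : {ffun cube d -> R} -> {ffun cube d -> R})
  (Um Uminv : {ffun cube m -> R} -> {ffun cube m -> R})
  (dT : measure_display) (T : measurableType dT) (P : probability T R)
  (X : nat -> T -> 'I_d * {ffun cube d -> V}) :
  (0 < d)%N -> (d <= m)%N -> injective psi ->
  (-1 \in V) -> (1 \in V) ->
  (forall k, 0 < p k < 1) -> \sum_(k < d) p k = 1 ->
  basis_transform Ud Udinv -> compatible Ud ->
  basis_transform Um Uminv -> compatible Um ->
  (* the i-th sample (k_i, h'_i): Pr[k_i = k] = p_k, h'_i uniform on F^d_k
     (k : 'I_d stands for the degree bound k+1 in [d]) *)
  (forall i a, measurable [set w | X i w = a]) ->
  (forall i (k : 'I_d) (h : {ffun cube d -> V}),
     P [set w | X i w = (k, h)] =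
     (p k * (if h \in Fk d V k.+1 then (#|Fk d V k.+1|%:R)^-1 else 0))%:E) ->
  mutually_independent P X ->
  {ae P, forall w,
    exists L : {ffun cube m -> cube d} -> R,
      (forall Phi, admissible psi Phi ->
         objective psi Udinv Uminv (fun i => (X i w).2) Phi n @[n --> \oo]
           --> L Phi) /\
      (forall Phis, admissible psi Phis ->
         (forall Phi, admissible psi Phi -> L Phis <= L Phi) ->
         exists (pi : {perm 'I_d}) (s : 'I_d -> R),
           (forall j, s j = 1 \/ s j = -1) /\
           (forall (j : 'I_d) (z : cube d),
              pm1 R (Phis (psi z) j) = s j * pm1 R (z (pi j))))}.
Proof.
move=> hd hdm psiI Vm1 V1 hp hsum HUd Hcd HUm Hcm mX PX indep.
pose A := ('I_d * {ffun cube d -> V})%type.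
pose qa (a : A) : R := p a.1 * (if a.2 \in Fk d V a.1.+1 then (#|Fk d V a.1.+1|%:R)^-1 else 0).
pose Bs (a : A) i := [set w | X i w = a].
have mBs a i : measurable (Bs a i) by apply: mX.
have PBs a i : P (Bs a i) = (qa a)%:E by case: a => k h; exact: PX.
have PBBs a i j : i != j -> P (Bs a i `&` Bs a j) = (qa a * qa a)%:E.
  move=> ij; have := indep [fset i; j]%fset (fun _ => a).
  rewrite big_fsetU1 ?big_seq_fset1 /=; last by rewrite inE.
  rewrite -!/(Bs a _) !PBs -EFinM => <-; congr (P _).
  apply/seteqP; split => w /=.
    by move=> [Hi Hj] k /=; rewrite !inE => /orP [] /eqP ->.
  by move=> H; split; apply: H => /=; rewrite !inE eqxx ?orbT.
have ae_all : {ae P, forall w, forall a, (fun n => n%:R^-1 * Sn R (Bs a) n w) @ \oo --> qa a}.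
  apply: filter_forall => a; apply: slln => //; exact: PBBs.
apply: filterS ae_all => w Hw.
pose D (Phi : {ffun cube m -> cube d}) (h : {ffun cube d -> V}) : R :=
  (degU Udinv (gfun psi Phi h))%:R.
pose L Phi := \sum_(a : A) D Phi a.2 * qa a.
exists L; split.
  move=> Phi _.
  have -> : objective psi Udinv Uminv (fun i => (X i w).2) Phi =
     (fun n => \sum_(a : A) D Phi a.2 * (n%:R^-1 * Sn R (Bs a) n w) +
               n%:R^-1 * (\sum_(j < d) (degU Uminv (coordf R Phi j)))%:R).
    apply: funext => n; rewrite /objective mulrDr; congr (_ + _).
    rewrite (eq_bigr (fun a : A => n%:R^-1 * (D Phi a.2 * Sn R (Bs a) n w))); last first.
      by move=> a _; rewrite mulrCA.
    rewrite -mulr_sumr; congr (_ * _).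
    rewrite /Sn; under [RHS]eq_bigr do rewrite mulr_sumr.
    rewrite exchange_big /=; apply: eq_bigr => i _.
    rewrite (bigD1 (X i w)) //= big1 ?addr0.
      by rewrite /indic mem_set // mulr1.
    by move=> a /negPf ai; rewrite /indic memNset ?mulr0 // /Bs /= => H; move: ai; rewrite H eqxx.
  rewrite -[L Phi]addr0; apply: cvgD.
    apply: cvg_sum_seq => a; apply: cvgM; first exact: cvg_cst.
    exact: Hw.
  rewrite -(mul0r (\sum_(j < d) (degU Uminv (coordf R Phi j)))%:R).
  apply: cvgM; first exact: cvg_inv_nat.
  exact: cvg_cst.
move=> Phis admS minS.
exact: (min_part hd psiI Vm1 V1 hp HUd Hcd admS minS).
Qed.
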